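(* Let $D'\geq2$ and let $j_{1},j_{2}\geq0$ be integers with $j_{1}+j_{2}=D'-2$. Let $M$ be the $\mathfrak{m}\times D'$ circulant matrix whose first row is $(1,0^{j_{1}},-1,0^{j_{2}})$, where $0^{j}$ denotes $j$ consecutive zeros. If $\mathfrak{m}\leq\lceil D'/2\rceil$, then the rank of $M$ equals $\mathfrak{m}$.
   Context: An $\mathfrak{m}\times D'$ circulant matrix with first row $(\mathfrak{a}_{1},\ldots,\mathfrak{a}_{D'})$ is the matrix whose $i$-th row ($i=1,\ldots,\mathfrak{m}$) is the first row cyclically rotated to the right by $i-1$ positions; e.g. the second row is $(\mathfrak{a}_{D'},\mathfrak{a}_{1},\ldots,\mathfrak{a}_{D'-1})$. *)

(* Defs.v *)
From HB Require Import structures.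
From mathcomp Require Import all_boot all_order all_algebra.
Set Implicit Arguments. Unset Strict Implicit. Unset Printing Implicit Defensive.
Import GRing.Theory.
Local Open Scope ring_scope.

(* The m x D circulant matrix with first row (a 0, ..., a (D-1)) (0-indexed):
   row i is the first row cyclically rotated to the right by i positions,
   so its entry in column j is a ((j - i) mod D). *)
Definition circulant (R : nzRingType) (m D : nat) (a : nat -> R) : 'M[R]_(m, D) :=
  \matrix_(i < m, j < D) a ((j + (D - i %% D)) %% D)%N.

Definition row_pm (R : nzRingType) (j1 : nat) (k : nat) : R :=
  if k == 0%N then 1 else if k == j1.+1 then -1 else 0.

(* Main.v *)
Require Import Defs.
From HB Require Import structures.
From mathcomp Require Import all_boot all_order all_algebra.
From mathcomp Require Import zify.

Set Implicit Arguments. Unset Strict Implicit. Unset Printing Implicit Defensive.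
Import GRing.Theory.

Lemma mod2D x D : (x < 2 * D)%N -> (x %% D = if (x < D)%N then x else x - D)%N.
Proof.
move=> h2; case: ltnP => h1; first by rewrite modn_small.
rewrite -{1}(subnK h1) modnDr modn_small //; lia.
Qed.

Lemma row_pm_val (R : nzRingType) (D j1 i k : nat) :
  (j1.+1 < D)%N -> (i < D)%N -> (k < D)%N ->
  row_pm R j1 ((k + (D - i)) %% D) =
  ((i == k)%:R - (i == ((k + (D - j1.+1)) %% D)%N)%:R)%R.
Proof.
move=> hs hi hk.
rewrite (mod2D (x := k + (D - i))); last by lia.
rewrite (mod2D (x := k + (D - j1.+1))); last by lia.
rewrite /row_pm.
case: (ltnP (k + (D - i)) D) => h1; case: (ltnP (k + (D - j1.+1)) D) => h2.
- have -> : (k + (D - i) == 0)%N = (i == k) by apply/eqP/eqP; lia.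
  have -> : (k + (D - i) == j1.+1)%N = (i == k + (D - j1.+1))%N by apply/eqP/eqP; lia.
  case: eqP => e1; case: eqP => e2 //=; try lia; by rewrite ?subr0 ?sub0r.
- have -> : (k + (D - i) == 0)%N = (i == k) by apply/eqP/eqP; lia.
  have -> : (k + (D - i) == j1.+1)%N = (i == k + (D - j1.+1) - D)%N by apply/eqP/eqP; lia.
  case: eqP => e1; case: eqP => e2 //=; try lia; by rewrite ?subr0 ?sub0r.
- have -> : (k + (D - i) - D == 0)%N = (i == k) by apply/eqP/eqP; lia.
  have -> : (k + (D - i) - D == j1.+1)%N = (i == k + (D - j1.+1))%N by apply/eqP/eqP; lia.
  case: eqP => e1; case: eqP => e2 //=; try lia; by rewrite ?subr0 ?sub0r.
- have -> : (k + (D - i) - D == 0)%N = (i == k) by apply/eqP/eqP; lia.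
  have -> : (k + (D - i) - D == j1.+1)%N = (i == k + (D - j1.+1) - D)%N by apply/eqP/eqP; lia.
  case: eqP => e1; case: eqP => e2 //=; try lia; by rewrite ?subr0 ?sub0r.
Qed.

Lemma comb_zero (R : zmodType) (D m s : nat) (c : nat -> R) :
  (0 < s < D)%N -> (2 * m <= D + 1)%N ->
  (forall j, (m <= j)%N -> c j = 0%R) ->
  (forall j, (j < D)%N -> c j = c ((j + s) %% D)) ->
  forall j, c j = 0%R.
Proof.
move=> hs hm c0 H.
case: (ltnP s m) => hsm.
- suff: forall n j, (m - j <= n)%N -> c j = 0%R by move=> P j; exact: (P (m - j)%N).
  elim=> [|n IH] j hj; first by apply: c0; lia.
  case: (ltnP j m) => hjm; last exact: c0.
  rewrite H; last lia.
  rewrite modn_small; last lia.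
  apply: IH; lia.
- elim/ltn_ind => j IH.
  case: (ltnP j m) => hjm; last exact: c0.
  rewrite H; last lia.
  rewrite mod2D; last lia.
  case: ltnP => h; first by apply: c0; lia.
  apply: IH; lia.
Qed.

Theorem lemma6 (R : numFieldType) (D j1 j2 m : nat) :
  (2 <= D)%N -> (j1 + j2)%N = (D - 2)%N ->
  (m <= uphalf D)%N ->
  \rank (circulant m D (row_pm R j1)) = m.
Proof.
move=> hD hj hm.
have hm2 : (2 * m <= D + 1)%N.
  have := odd_double_half D. rewrite uphalf_half in hm.
  case: (odd D) hm => /=; rewrite -!muln2; lia.
set A := circulant m D (row_pm R j1).
have key : forall v : 'rV[R]_m, (v *m A = 0)%R -> v = 0%R.
  move=> v hv.
  pose c (j : nat) := (\sum_(i < m | val i == j) v ord0 i)%R.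
  have cv : forall i : 'I_m, c i = v ord0 i.
    move=> i; rewrite /c (bigD1 i) //= big1 ?addr0 // => i' /andP [/eqP e ne].
    by case/eqP: ne; apply: val_inj.
  have c0 : forall j, (m <= j)%N -> c j = 0%R.
    move=> j hj'; rewrite /c big_pred0 // => i; apply/eqP => e.
    have := ltn_ord i; rewrite e; lia.
  have col : forall k : 'I_D, c k = c ((k + (D - j1.+1)) %% D).
    move=> k; apply/eqP; rewrite -subr_eq0; apply/eqP.
    have := congr1 (fun M : 'M_(1, D) => M ord0 k) hv.
    rewrite !mxE => <-.
    rewrite /c. rewrite (big_mkcond (fun i : 'I_m => val i == val k)) (big_mkcond (fun i : 'I_m => val i == _)) -sumrB. apply: eq_bigr => i _.
    rewrite /A mxE (@modn_small i D); last by have := ltn_ord i; lia.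
    rewrite row_pm_val //; try lia; last by have := ltn_ord i; lia.
    by rewrite mulrBr !mulr_natr !mulrb.
  have all0 := @comb_zero _ D m j1.+1 c ltac:(lia) hm2 c0.
  have : forall j, c j = 0%R.
    apply: all0 => j hj'.
    have e : (((j + j1.+1) %% D + (D - j1.+1)) %% D = j)%N.
      rewrite modnDml -addnA subnKC ?modnDr ?modn_small //; lia.
    have hk : ((j + j1.+1) %% D < D)%N by rewrite ltn_mod; lia.
    by rewrite (col (Ordinal hk)) /= e.
  move=> z; apply/rowP => i; rewrite mxE -cv; exact: z.
apply/eqP; change (row_free A); rewrite -kermx_eq0; apply/eqP/row_matrixP => i.
rewrite row0; apply: key.
by rewrite -row_mul mulmx_ker row0.
Qed.
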